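(* Let $v, v'$ be pure (index-free) $\lambda$-terms. The following are equivalent: (1) there is a top-level term $t$ such that $v \mapsto^* t$ in the indexed small-step head-reduction semantics, $t$ is irreducible there (there is no $t'$ with $t \mapsto t'$), and $t \hookrightarrow^* v'$ by the indexed readback relation; (2) there is a command $c$ of the projection-based head-reduction machine such that $\langle v \,\|\, \mathsf{tp}\rangle \to^* c$, $c$ is irreducible in that machine (there is no $c'$ with $c \to c'$), and $c \hookrightarrow^* v'$ by the machine's readback relation. Here $\to^*$, $\mapsto^*$ and $\hookrightarrow^*$ denote reflexive–transitive closures.
   Context: Pure $\lambda$-terms: $v ::= x \mid v\,v \mid \lambda x.v$; substitution $v[v'/x]$ is capture-avoiding. Indexed small-step semantics. Indices $i ::= \mathrm{zero} \mid \mathrm{succ}(i)$. Terms $v ::= x \mid v\,v \mid \lambda x.v \mid i$. Top-level terms $t ::= v \mid \lambda.t$ (a variable-free binder usable only at top level). Evaluation contexts $E ::= \Box \mid E\,v$. Top-level contexts $S ::= \Box \mid \lambda.S$. $\mathrm{Count}(\Box)=\mathrm{zero}$, $\mathrm{Count}(\lambda.S)=\mathrm{succ}(\mathrm{Count}(S))$. Reduction rules: $S[E[(\lambda x.v)\,v']] \mapsto S[E[v[v'/x]]]$ and $S[\lambda x.v] \mapsto S[\lambda.v[\mathrm{Count}(S)/x]]$. Readback rule: $S[\lambda.v] \hookrightarrow S[\lambda x.v[x/\mathrm{Count}(S)]]$, where $x$ is fresh and $v[x/i]$ replaces every occurrence of the index $i$ in $v$ by $x$. A top-level term $S[v]$ is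 legal iff every index $i$ occurring in $v$ satisfies $i < \mathrm{Count}(S)$; only legal top-level terms are considered. Projection-based head-reduction machine. Commands $c ::= \langle v \,\|\, E\rangle$; terms $v ::= x \mid v\,v \mid \lambda x.v \mid \mathsf{car}(S)$; co-terms $E ::= v\cdot E \mid S$; stuck co-terms $S ::= \mathsf{tp} \mid \mathsf{cdr}(S)$. Rules: $\langle v\,v' \,\|\, E\rangle \to \langle v \,\|\, v'\cdot E\rangle$; $\langle \lambda x.v \,\|\, v'\cdot E\rangle \to \langle v[v'/x] \,\|\, E\rangle$; $\langle \lambda x.v \,\|\, S\rangle \to \langle v[\mathsf{car}(S)/x] \,\|\, \mathsf{cdr}(S)\rangle$. Readback rules: $\langle v \,\|\, v'\cdot E\rangle \hookrightarrow \langle v\,v' \,\|\, E\rangle$; $\langle v \,\|\, \mathsf{tp}\rangle \hookrightarrow v$; $\langle v \,\|\, \mathsf{cdr}(S)\rangle \hookrightarrow \langle \lambda x.v[x/\mathsf{car}(S)] \,\|\, S\rangle$ with $x$ fresh, where $v[x/\mathsf{car}(S)]$ replaces every occurrence of $\mathsf{car}(S)$ in $v$ by $x$. Writing $\mathsf{cdr}^n$ for $n$ applications of $\mathsf{cdr}$, set $\mathsf{cdr}^n(\mathsf{tp}) < \mathsf{cdr}^m(\mathsf{tp})$ iff $n<m$. A command $\langle v_1 \,\|\, v_2\cdots v_n\cdot S\rangle$ is legal iff for every $\mathsf{car}(S')$ occurring in any $v_i$, $S' < S$; only legal commands are considered. *)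

(* Defs.v *)
(* Lambda terms are represented with de Bruijn indices for
   bound variables (terms are taken up to alpha-equivalence; "fresh x" in the
   readback rules becomes "introduce a new binder and shift free variables").
   The "indices" i of the indexed semantics and the "car(S)" of the machine are
   closed constants, distinct from variables. *)
From Stdlib Require Import Arith Relations.

Inductive lterm : Type :=
| LVar : nat -> lterm
| LApp : lterm -> lterm -> lterm
| LLam : lterm -> lterm.

(** Lambda-terms extended with closed constants of type A:
    A = nat    : the indices  i ::= zero | succ(i)  of the indexed semantics;
    A = stuck  : the constants car(S) of the projection-based machine. *)
Inductive tm (A : Type) : Type :=
| Var : nat -> tm A
| App : tm A -> tm A -> tm A
| Lam : tm A -> tm A
| Cst : A -> tm A.
Arguments Var {A} _.
Arguments App {A} _ _.
Arguments Lam {A} _.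
Arguments Cst {A} _.

Fixpoint embed {A : Type} (v : lterm) : tm A :=
  match v with
  | LVar n => Var n
  | LApp a b => App (embed a) (embed b)
  | LLam b => Lam (embed b)
  end.

Fixpoint lift {A : Type} (d c : nat) (t : tm A) : tm A :=
  match t with
  | Var n => if n <? c then Var n else Var (n + d)
  | App a b => App (lift d c a) (lift d c b)
  | Lam b => Lam (lift d (S c) b)
  | Cst x => Cst x
  end.

Fixpoint subst {A : Type} (k : nat) (u : tm A) (t : tm A) : tm A :=
  match t with
  | Var n => if n =? k then lift k 0 u
             else if k <? n then Var (n - 1) else Var n
  | App a b => App (subst k u a) (subst k u b)
  | Lam b => Lam (subst (S k) u b)
  | Cst x => Cst x
  end.

Definition beta {A : Type} (b u : tm A) : tm A := subst 0 u b.

(** [abst p d t]: replace every constant satisfying p by the variable bound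
    by a new binder placed at depth d above t (free variables are shifted).
    [Lam (abst p 0 v)] is  \x. v[x/c]  with x fresh. *)
Fixpoint abst {A : Type} (p : A -> bool) (d : nat) (t : tm A) : tm A :=
  match t with
  | Var n => if n <? d then Var n else Var (S n)
  | App a b => App (abst p d a) (abst p d b)
  | Lam b => Lam (abst p (S d) b)
  | Cst x => if p x then Var d else Cst x
  end.

Definition iterm := tm nat.

Inductive top : Type :=
| TV : iterm -> top
| TLam : top -> top.

Inductive hstep : iterm -> iterm -> Prop :=
| hs_beta : forall b u, hstep (App (Lam b) u) (beta b u)
| hs_app : forall a a' w, hstep a a' -> hstep (App a w) (App a' w).

(** [tstep k t t']: reduction of S[..] where k = Count of the enclosing
    top-level context. *)
Inductive tstep : nat -> top -> top -> Prop :=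
| ts_head : forall k v v', hstep v v' -> tstep k (TV v) (TV v')
| ts_lam : forall k b, tstep k (TV (Lam b)) (TLam (TV (beta b (Cst k))))
| ts_under : forall k t t', tstep (S k) t t' -> tstep k (TLam t) (TLam t').

Definition istep (t t' : top) : Prop := tstep 0 t t'.

(** readback  S[\.v] ~> S[\x. v[x/Count(S)]] *)
Inductive trb : nat -> top -> top -> Prop :=
| trb_here : forall k v,
    trb k (TLam (TV v)) (TV (Lam (abst (Nat.eqb k) 0 v)))
| trb_under : forall k t t', trb (S k) t t' -> trb k (TLam t) (TLam t').

Definition ireadback (t t' : top) : Prop := trb 0 t t'.

Inductive stuck : Type :=
| Tp : stuck
| Cdr : stuck -> stuck.

Fixpoint stuck_eqb (s s' : stuck) : bool :=
  match s, s' with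
  | Tp, Tp => true
  | Cdr a, Cdr b => stuck_eqb a b
  | _, _ => false
  end.

Definition mterm := tm stuck.

Inductive coterm : Type :=
| Push : mterm -> coterm -> coterm
| Stk : stuck -> coterm.

Inductive cmd : Type :=
| Cmd : mterm -> coterm -> cmd.

Inductive mstep : cmd -> cmd -> Prop :=
| ms_push : forall v v' E, mstep (Cmd (App v v') E) (Cmd v (Push v' E))
| ms_beta : forall b v' E, mstep (Cmd (Lam b) (Push v' E)) (Cmd (beta b v') E)
| ms_proj : forall b s,
    mstep (Cmd (Lam b) (Stk s)) (Cmd (beta b (Cst s)) (Stk (Cdr s))).

Inductive mrb : cmd + mterm -> cmd + mterm -> Prop :=
| mrb_app : forall v v' E,
    mrb (inl (Cmd v (Push v' E))) (inl (Cmd (App v v') E))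
| mrb_tp : forall v, mrb (inl (Cmd v (Stk Tp))) (inr v)
| mrb_cdr : forall v s,
    mrb (inl (Cmd v (Stk (Cdr s))))
        (inl (Cmd (Lam (abst (stuck_eqb s) 0 v)) (Stk s))).

(* Main.v *)
Require Import Defs.
From Stdlib Require Import Relations Arith Lia.

Fixpoint cmap {A B : Type} (f : A -> B) (t : tm A) : tm B :=
  match t with
  | Var n => Var n
  | App a b => App (cmap f a) (cmap f b)
  | Lam b => Lam (cmap f b)
  | Cst x => Cst (f x)
  end.

Lemma cmap_lift {A B} (f : A -> B) d t : forall c,
  cmap f (lift d c t) = lift d c (cmap f t).
Proof. induction t; intros c; simpl; try (destruct (_ <? _)); simpl; congruence. Qed.

Lemma cmap_subst {A B} (f : A -> B) u t : forall k,
  cmap f (subst k u t) = subst k (cmap f u) (cmap f t).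
Proof.
  induction t; intros k; simpl; try congruence.
  destruct (n =? k); [apply cmap_lift|]. destruct (k <? n); reflexivity.
Qed.

Lemma cmap_beta {A B} (f : A -> B) b u :
  cmap f (beta b u) = beta (cmap f b) (cmap f u).
Proof. apply cmap_subst. Qed.

Lemma cmap_abst {A B} (f : A -> B) (p : A -> bool) (q : B -> bool)
  (H : forall x, p x = q (f x)) t : forall d,
  cmap f (abst p d t) = abst q d (cmap f t).
Proof.
  induction t; intros d; simpl; try congruence.
  - destruct (n <? d); reflexivity.
  - rewrite H. destruct (q (f a)); reflexivity.
Qed.

Fixpoint depth (s : stuck) : nat := match s with Tp => 0 | Cdr s => S (depth s) end.

Lemma stuck_eqb_depth s : forall x, stuck_eqb s x = Nat.eqb (depth s) (depth x).
Proof. induction s; destruct x; simpl; auto. Qed.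

Definition cm (t : mterm) : iterm := cmap depth t.

Lemma cm_embed v : cm (embed v) = embed v.
Proof. unfold cm; induction v; simpl; congruence. Qed.

Lemma cm_embed_inj v : forall w, cm w = embed v -> w = embed v.
Proof.
  unfold cm; induction v; destruct w; simpl; intros H; try discriminate;
  inversion H; f_equal; auto.
Qed.

Fixpoint plug (a : iterm) (E : coterm) : iterm :=
  match E with Push w E => plug (App a (cm w)) E | Stk _ => a end.
Fixpoint base (E : coterm) : stuck := match E with Push _ E => base E | Stk s => s end.
Fixpoint tlams (n : nat) (t : top) : top :=
  match n with 0 => t | S n => TLam (tlams n t) end.
Definition Tr (c : cmd) : top :=
  match c with Cmd v E => tlams (depth (base E)) (TV (plug (cm v) E)) end.

Lemma tlams_S n t : tlams (S n) t = tlams n (TLam t).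
Proof. induction n; simpl; auto. simpl in IHn. rewrite IHn. reflexivity. Qed.

Lemma tlams_S' n t : TLam (tlams n t) = tlams n (TLam t).
Proof. apply (tlams_S n t). Qed.

Lemma tstep_lift n : forall k t t', tstep (n + k) t t' -> tstep k (tlams n t) (tlams n t').
Proof.
  induction n; intros k t t' H; simpl; auto.
  constructor. apply IHn. rewrite Nat.add_succ_r. exact H.
Qed.

Lemma trb_lift n : forall k t t', trb (n + k) t t' -> trb k (tlams n t) (tlams n t').
Proof.
  induction n; intros k t t' H; simpl; auto.
  constructor. apply IHn. rewrite Nat.add_succ_r. exact H.
Qed.

Lemma hstep_plug E : forall a a', hstep a a' -> hstep (plug a E) (plug a' E).
Proof. induction E; intros; simpl; auto. apply IHE. constructor; auto. Qed.

Inductive neutral : iterm -> Prop :=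
| n_var : forall n, neutral (Var n)
| n_cst : forall x, neutral (Cst x)
| n_app : forall a w, neutral a -> neutral (App a w).

Lemma neutral_nohstep a a' : hstep a a' -> neutral a -> False.
Proof.
  induction 1; intros Hn; inversion Hn; subst; auto.
  match goal with H : neutral (Lam _) |- _ => inversion H end.
Qed.

Lemma neutral_plug E : forall a, neutral a -> neutral (plug a E).
Proof. induction E; simpl; auto. intros. apply IHE. constructor; auto. Qed.

Lemma tstep_inv d : forall k a t', tstep k (tlams d (TV a)) t' ->
  (exists a', hstep a a') \/ exists b, a = Lam b.
Proof.
  induction d; simpl; intros k a t' H; inversion H; subst; eauto.
Qed.

Lemma hstep_det a a1 : hstep a a1 -> forall a2, hstep a a2 -> a1 = a2.
Proof.
  induction 1; intros a2 H2; inversion H2; subst; auto.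
  - match goal with H : hstep (Lam _) _ |- _ => inversion H end.
  - match goal with H : hstep (Lam _) _ |- _ => inversion H end.
  - f_equal; auto.
Qed.

Lemma tstep_det k t t1 : tstep k t t1 -> forall t2, tstep k t t2 -> t1 = t2.
Proof.
  induction 1; intros t2 H2; inversion H2; subst; auto.
  - f_equal; eauto using hstep_det.
  - match goal with H : hstep (Lam _) _ |- _ => inversion H end.
  - match goal with H : hstep (Lam _) _ |- _ => inversion H end.
  - f_equal; auto.
Qed.

Lemma trb_det k t t1 : trb k t t1 -> forall t2, trb k t t2 -> t1 = t2.
Proof.
  induction 1; intros t2 H2; inversion H2; subst; auto.
  - match goal with H : trb _ (TV _) _ |- _ => inversion H end.
  - match goal with H : trb _ (TV _) _ |- _ => inversion H end.
  - f_equal; auto.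
Qed.

Lemma det_confl {X} (R : X -> X -> Prop) (Hd : forall a b c, R a b -> R a c -> b = c) :
  forall a x, clos_refl_trans_1n X R a x -> forall y, clos_refl_trans_1n X R a y ->
  (forall z, ~ R x z) -> (forall z, ~ R y z) -> x = y.
Proof.
  induction 1; intros y0 Hy Nx Ny.
  - inversion Hy; subst; auto. exfalso; eapply Nx; eauto.
  - inversion Hy; subst.
    + exfalso; eapply Ny; eauto.
    + match goal with H1 : R x ?a, H2 : R x ?b |- _ => assert (a = b) by eauto end. subst. eauto.
Qed.

Lemma mstep_sim c c' : mstep c c' -> Tr c = Tr c' \/ istep (Tr c) (Tr c').
Proof.
  destruct 1; simpl.
  - left; reflexivity.
  - right. unfold istep. apply tstep_lift. rewrite Nat.add_0_r.
    constructor. apply hstep_plug. unfold cm. rewrite cmap_beta. constructor.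
  - right. unfold istep. rewrite tlams_S'. apply tstep_lift. rewrite Nat.add_0_r.
    unfold cm; rewrite cmap_beta. simpl. constructor.
Qed.

Lemma mrt_sim c c' : clos_refl_trans cmd mstep c c' -> clos_refl_trans top istep (Tr c) (Tr c').
Proof.
  induction 1.
  - destruct (mstep_sim _ _ H) as [E|E]; [rewrite E; apply rt_refl | apply rt_step; auto].
  - apply rt_refl.
  - eapply rt_trans; eauto.
Qed.

Definition not_app (h : mterm) : Prop := match h with App _ _ => False | _ => True end.

Lemma push_norm v : forall E, exists h E', clos_refl_trans cmd mstep (Cmd v E) (Cmd h E')
  /\ Tr (Cmd h E') = Tr (Cmd v E) /\ not_app h.
Proof.
  induction v; intros E.
  - exists (Var n), E; split; [apply rt_refl|simpl; auto].
  - destruct (IHv1 (Push v2 E)) as (h & E' & H1 & H2 & H3).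
    exists h, E'. split; [eapply rt_trans; [apply rt_step; constructor|exact H1]|].
    split; [rewrite H2; reflexivity|exact H3].
  - exists (Lam v), E; split; [apply rt_refl|simpl; auto].
  - exists (Cst a), E; split; [apply rt_refl|simpl; auto].
Qed.

Lemma neutral_irred h E : not_app h -> (forall b, h <> Lam b) ->
  ~ exists t', istep (Tr (Cmd h E)) t'.
Proof.
  intros Ha Hl [t' Ht]. unfold istep, Tr in Ht.
  assert (Hn : neutral (plug (cm h) E)).
  { apply neutral_plug. destruct h; simpl in *; try contradiction; try constructor.
    exfalso; eapply Hl; eauto. }
  destruct (tstep_inv _ _ _ _ Ht) as [[a' Ha']|[b Hb]].
  - eapply neutral_nohstep; eauto.
  - rewrite Hb in Hn. inversion Hn.
Qed.

Lemma step_lam b E : exists c2, mstep (Cmd (Lam b) E) c2 /\ istep (Tr (Cmd (Lam b) E)) (Tr c2).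
Proof.
  destruct E as [w E|s].
  - eexists; split; [apply ms_beta|]. simpl.
    unfold istep. apply tstep_lift. rewrite Nat.add_0_r.
    constructor. apply hstep_plug. unfold cm. rewrite cmap_beta. constructor.
  - eexists; split; [apply ms_proj|]. simpl.
    unfold istep. rewrite tlams_S'. apply tstep_lift. rewrite Nat.add_0_r.
    unfold cm; rewrite cmap_beta. simpl. constructor.
Qed.

Lemma sim1 t t' : istep t t' -> forall c, Tr c = t ->
  exists c', clos_refl_trans cmd mstep c c' /\ Tr c' = t'.
Proof.
  intros Hs [v E] Hc.
  destruct (push_norm v E) as (h & E1 & H1 & H2 & H3).
  destruct h as [n|a b|b|x].
  - exfalso. apply (neutral_irred (Var n) E1); [simpl; auto | intros b0 Hb0; discriminate | ].
    exists t'. rewrite H2, Hc. exact Hs.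
  - contradiction.
  - destruct (step_lam b E1) as (c2 & Hm & Hi).
    exists c2. split.
    + eapply rt_trans; [exact H1| apply rt_step; exact Hm].
    + rewrite H2, Hc in Hi. eapply tstep_det; eauto.
  - exfalso. apply (neutral_irred (Cst x) E1); [simpl; auto | intros b0 Hb0; discriminate | ].
    exists t'. rewrite H2, Hc. exact Hs.
Qed.

Lemma sim_rt t t' : clos_refl_trans top istep t t' -> forall c, Tr c = t ->
  exists c', clos_refl_trans cmd mstep c c' /\ Tr c' = t'.
Proof.
  intros H. apply clos_rt_rt1n in H. induction H; intros c Hc.
  - exists c; split; auto. apply rt_refl.
  - destruct (sim1 _ _ H c Hc) as (c1 & Hc1 & E1).
    destruct (IHclos_refl_trans_1n c1 E1) as (c2 & Hc2 & E2).
    exists c2; split; auto. eapply rt_trans; eauto.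
Qed.

Lemma inr_stuck (y z : cmd + mterm) : clos_refl_trans_1n _ mrb y z -> forall w, y = inr w -> z = inr w.
Proof. induction 1; intros w Hw; subst; auto. inversion H. Qed.

Lemma rb_sim x y : clos_refl_trans_1n _ mrb x y -> forall c w, x = inl c -> y = inr w ->
  clos_refl_trans top ireadback (Tr c) (TV (cm w)).
Proof.
  induction 1; intros c w Hx Hy; subst; try discriminate.
  inversion H; subst.
  - specialize (IHclos_refl_trans_1n _ w eq_refl eq_refl). simpl in *. exact IHclos_refl_trans_1n.
  - pose proof (inr_stuck _ _ H0 _ eq_refl) as Hq. inversion Hq; subst. simpl. apply rt_refl.
  - specialize (IHclos_refl_trans_1n _ w eq_refl eq_refl).
    eapply rt_trans; [apply rt_step|exact IHclos_refl_trans_1n].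
    simpl. unfold ireadback. rewrite tlams_S'. apply trb_lift. rewrite Nat.add_0_r.
    unfold cm; simpl. rewrite (cmap_abst depth (stuck_eqb s) (Nat.eqb (depth s))).
    + constructor.
    + apply stuck_eqb_depth.
Qed.

Lemma rb_exists_stk s : forall v, exists w, clos_refl_trans _ mrb (inl (Cmd v (Stk s))) (inr w).
Proof.
  induction s; intros v.
  - exists v. apply rt_step. constructor.
  - destruct (IHs (Lam (abst (stuck_eqb s) 0 v))) as [w Hw].
    exists w. eapply rt_trans; [apply rt_step; constructor|exact Hw].
Qed.

Lemma rb_exists E : forall v, exists w, clos_refl_trans _ mrb (inl (Cmd v E)) (inr w).
Proof.
  induction E; intros v.
  - destruct (IHE (App v m)) as [w Hw].
    exists w. eapply rt_trans; [apply rt_step; constructor|exact Hw].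
  - apply rb_exists_stk.
Qed.

Lemma rb_det {X} (R : X -> X -> Prop) (Hd : forall a b c, R a b -> R a c -> b = c) a x y :
  clos_refl_trans X R a x -> clos_refl_trans X R a y ->
  (forall z, ~ R x z) -> (forall z, ~ R y z) -> x = y.
Proof.
  intros H1 H2. apply clos_rt_rt1n in H1. apply clos_rt_rt1n in H2.
  eapply det_confl; eauto.
Qed.

Lemma machine_irred_head h E : ~ (exists c', mstep (Cmd h E) c') ->
  (exists n, h = Var n) \/ (exists x, h = Cst x).
Proof.
  intros N. destruct h.
  - eauto.
  - exfalso; apply N; eexists; constructor.
  - exfalso. destruct (step_lam h E) as (c2 & H & _). apply N; eauto.
  - eauto.
Qed.

Theorem theorem3 (v v' : lterm) :
  (exists t : top,
      clos_refl_trans top istep (TV (embed v)) t /\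
      ~ (exists t', istep t t') /\
      clos_refl_trans top ireadback t (TV (embed v')))
  <->
  (exists c : cmd,
      clos_refl_trans cmd mstep (Cmd (embed v) (Stk Tp)) c /\
      ~ (exists c', mstep c c') /\
      clos_refl_trans (cmd + mterm) mrb (inl c) (inr (embed v'))).
Proof.
  assert (H0 : Tr (Cmd (embed v) (Stk Tp)) = TV (embed v)).
  { simpl. rewrite cm_embed. reflexivity. }
  split.
  - intros (t & Hr & Hn & Hb).
    destruct (sim_rt _ _ Hr _ H0) as ([h E] & Hc & Et).
    destruct (push_norm h E) as (h1 & E1 & P1 & P2 & P3).
    assert (Hh : (exists n, h1 = Var n) \/ (exists x, h1 = Cst x)).
    { destruct h1 as [n|a b|b|x]; eauto; [contradiction|].
      exfalso. destruct (step_lam b E1) as (c2 & _ & Hi). apply Hn. exists (Tr c2).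
      rewrite P2, Et in Hi. exact Hi. }
    exists (Cmd h1 E1). split; [eapply rt_trans; eauto|split].
    + intros [c' Hc']. destruct Hh as [[n ->]|[x ->]]; inversion Hc'.
    + destruct (rb_exists E1 h1) as [w Hw].
      assert (Hw' := Hw). apply clos_rt_rt1n in Hw'.
      pose proof (rb_sim _ _ Hw' _ _ eq_refl eq_refl) as Hrb.
      rewrite P2, Et in Hrb.
      assert (TV (cm w) = TV (embed v')).
      { eapply rb_det; [ | exact Hrb | exact Hb | |].
        - intros a b c Hab Hac. eapply trb_det; eauto.
        - intros z Hz. inversion Hz.
        - intros z Hz. inversion Hz. }
      inversion H. apply cm_embed_inj in H2. subst. exact Hw.
  - intros (c & Hr & Hn & Hb).
    exists (Tr c). split; [rewrite <- H0; apply mrt_sim; auto|split].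
    + destruct c as [h E]. destruct (machine_irred_head _ _ Hn) as [[n ->]|[x ->]];
        apply neutral_irred; simpl; auto; discriminate.
    + apply clos_rt_rt1n in Hb. pose proof (rb_sim _ _ Hb _ _ eq_refl eq_refl) as Hrb.
      rewrite cm_embed in Hrb. exact Hrb.
Qed.
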